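(* Let $d\ge0$ and $\alpha_i\in(0,1/i]$ for every $i\in\{1,\dots,d+1\}$, and consider $P=\mathbb Z_{\ge0}^{d+1}$. Then for every $v\in P$ and every integer $t\ge0$, $$\sum_{u\in L_t}p(u\to v)\le1.$$
   Context: Finite model: $P=\mathbb{Z}_{\ge0}^{d+1}$ with $u\le v$ iff $v-u\in\mathbb{Z}_{\ge0}^{d+1}$; $L_t$ = tuples with coordinate sum $t$; $\mathfrak p(v)$ = set of elements covered by $v$, so $|\mathfrak p(v)|$ is the number of positive coordinates of $v$. Path weights: each covering pair $u\lessdot v$ gives a directed edge $u\to v$ of weight $\alpha_{|\mathfrak p(v)|}$; for $u,v\in P$, $p(u\to v)$ is the sum over all directed paths (saturated chains) from $u$ to $v$ of the product of edge weights, with $p(v\to v)=1$ and $p(u\to v)=0$ if $u\not\le v$. *)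

(* Defs.v *)
From mathcomp Require Import all_boot all_order all_algebra.
Set Implicit Arguments. Unset Strict Implicit. Unset Printing Implicit Defensive.
Import Order.TTheory GRing.Theory Num.Theory.
Local Open Scope ring_scope.

Definition point (d : nat) := {ffun 'I_d.+1 -> nat}.

Definition psum d (v : point d) : nat := (\sum_(i < d.+1) v i)%N.

Definition npos d (v : point d) : nat := #|[set i | (0 < v i)%N]|.

Definition walk d (u : point d) (s : seq 'I_d.+1) : point d :=
  [ffun i => (u i + count_mem i s)%N].

(* Weight of the saturated chain from u given by steps s: product over
   its edges w -> w' of alpha_{|p(w')|}. *)
Definition chain_weight (R : nzRingType) d (alpha : nat -> R)
  (u : point d) (s : seq 'I_d.+1) : R :=
  \prod_(j < size s) alpha (npos (walk u (take j.+1 s))).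

(* p(u -> v): sum over all saturated chains from u to v (encoded by their
   step sequences, of length psum v - psum u) of the chain weights.
   Gives 1 when u = v (empty chain) and 0 when u is not <= v. *)
Definition pw (R : nzRingType) d (alpha : nat -> R) (u v : point d) : R :=
  \sum_(s : (psum v - psum u).-tuple 'I_d.+1 | walk u s == v)
     chain_weight alpha u s.

Definition of_bounded d t (f : {ffun 'I_d.+1 -> 'I_t.+1}) : point d :=
  [ffun i => nat_of_ord (f i)].

(* \sum_{u in L_t} p(u -> v); every u in L_t has coordinates <= t,
   so L_t is enumerated by bounded functions with coordinate sum t. *)
Definition level_sum (R : nzRingType) d (alpha : nat -> R) (t : nat)
  (v : point d) : R :=
  \sum_(f : {ffun 'I_d.+1 -> 'I_t.+1} | psum (of_bounded f) == t)
     pw alpha (of_bounded f) v.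

(* Main.v *)
Require Import Defs.
From mathcomp Require Import all_boot all_order all_algebra.
Import Order.TTheory GRing.Theory Num.Theory.
Local Open Scope ring_scope.

Section Aux.
Variable (R : realFieldType) (d : nat) (alpha : nat -> R).

Definition pwn n (u v : point d) : R :=
  \sum_(s : n.-tuple 'I_d.+1 | walk u s == v) chain_weight alpha u s.

Definition decp (v : point d) (i : 'I_d.+1) : point d :=
  [ffun j => (v j - (j == i))%N].

Lemma walk_rcons u (s : seq 'I_d.+1) i :
  walk u (rcons s i) = [ffun j => (walk u s j + (j == i))%N].
Proof.
apply/ffunP => j; rewrite !ffunE -cats1 count_cat /= addn0 addnA.
by rewrite eq_sym.
Qed.

Lemma cw_rcons u (s : seq 'I_d.+1) i :
  chain_weight alpha u (rcons s i) =
  chain_weight alpha u s * alpha (npos (walk u (rcons s i))).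
Proof.
rewrite /chain_weight size_rcons big_ord_recr /=; congr (_ * _).
  apply: eq_bigr => j _; congr (alpha (npos (walk u _))).
  rewrite -cats1 take_cat.
  case: ltnP => H //.
  have -> : j.+1 = size s by apply/eqP; rewrite eqn_leq H ltn_ord.
  by rewrite subnn take0 cats0 take_size.
by rewrite take_oversize // size_rcons.
Qed.

Lemma split_rcons n (F : n.+1.-tuple 'I_d.+1 -> R) :
  \sum_(s : n.+1.-tuple 'I_d.+1) F s =
  \sum_(i : 'I_d.+1) \sum_(s : n.-tuple 'I_d.+1) F [tuple of rcons s i].
Proof.
rewrite pair_big /=.
pose h (p : 'I_d.+1 * n.-tuple 'I_d.+1) : n.+1.-tuple 'I_d.+1 :=
  [tuple of rcons p.2 p.1].
pose k (s : n.+1.-tuple 'I_d.+1) : 'I_d.+1 * n.-tuple 'I_d.+1 :=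
  (last (thead s) (behead s), belast_tuple (thead s) (behead_tuple s)).
rewrite (reindex h) //.
exists k.
  case=> i s; rewrite /k /h /=; move=> _; congr pair.
    case: s => [[|x s] Hs] /=; rewrite /thead (tnth_nth i) /= ?last_rcons //.
  apply: val_inj => /=.
  case: s => [[|x s] Hs] //=.
  by rewrite /thead (tnth_nth x) /= belast_rcons.
move=> s _; apply: val_inj => /=.
case: s => [[|x s] Hs] //=.
by rewrite /thead (tnth_nth x) /= -lastI.
Qed.

Lemma walk_rcons_eq u s i v :
  (walk u (rcons s i) == v) = (0 < v i)%N && (walk u s == decp v i).
Proof.
rewrite walk_rcons; apply/idP/idP.
  move/eqP => <-; rewrite ffunE eqxx addn1 /=.
  by apply/eqP/ffunP => j; rewrite !ffunE addnK.
case/andP => Hv /eqP Hw; apply/eqP/ffunP => j.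
rewrite ffunE Hw ffunE subnK //.
by case: eqP => [->|]. 
Qed.

Lemma pwn_S n u v :
  pwn n.+1 u v = alpha (npos v) * \sum_(i | (0 < v i)%N) pwn n u (decp v i).
Proof.
rewrite /pwn big_mkcond split_rcons /= mulr_sumr [RHS]big_mkcond /=.
apply: eq_bigr => i _.
case: ifP => Hvi.
  rewrite mulr_sumr [RHS]big_mkcond; apply: eq_bigr => s _ /=.
  rewrite walk_rcons_eq Hvi /=.
  case: ifP => // /eqP Hw.
  rewrite cw_rcons mulrC; congr (_ * _); congr (alpha (npos _)).
  by apply/eqP; rewrite walk_rcons_eq Hvi Hw eqxx.
apply: big1 => s _; by rewrite walk_rcons_eq Hvi.
Qed.

Variable t : nat.

Definition G n (v : point d) : R :=
  \sum_(f : {ffun 'I_d.+1 -> 'I_t.+1} | psum (of_bounded f) == t)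
     pwn n (of_bounded f) v.

Lemma G_S n v :
  G n.+1 v = alpha (npos v) * \sum_(i | (0 < v i)%N) G n (decp v i).
Proof.
rewrite /G (eq_bigr (fun f => alpha (npos v) *
  \sum_(i | (0 < v i)%N) pwn n (of_bounded f) (decp v i))); last first.
  by move=> f _; rewrite pwn_S.
by rewrite -mulr_sumr exchange_big.
Qed.

Lemma pwn0 u v : pwn 0 u v = (u == v)%:R.
Proof.
rewrite /pwn big_mkcond (big_pred1 [tuple]) /=; last first.
  by move=> s; apply/esym/eqP; exact: tuple0.
have -> : walk u [tuple] = u by apply/ffunP => j; rewrite ffunE /= addn0.
by case: (u == v) => //; rewrite /chain_weight big_ord0.
Qed.

Lemma of_bounded_inj : injective (@of_bounded d t).
Proof.
move=> f g H; apply/ffunP => j; apply: val_inj.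
by have := congr1 (fun w : point d => w j) H; rewrite !ffunE.
Qed.

Lemma G0 v : G 0 v <= 1.
Proof.
rewrite /G; under eq_bigr do rewrite pwn0.
case: (pickP [pred f : {ffun 'I_d.+1 -> 'I_t.+1} | (psum (of_bounded f) == t) && (of_bounded f == v)]).
  move=> f0 /andP [H0 /eqP E0].
  rewrite (bigD1 f0) //= E0 eqxx big1 ?addr0 //.
  move=> f /andP [_ Hf]; case: eqP => // Ef.
  by rewrite -E0 in Ef; move/of_bounded_inj: Ef => Ef; rewrite Ef eqxx in Hf.
move=> Hn; rewrite big1 // => f Hf.
by have := Hn f; rewrite /= Hf /=; case: eqP.
Qed.

Hypothesis halpha : forall i : nat, (1 <= i <= d.+1)%N ->
     0 < alpha i /\ alpha i <= (i%:R)^-1.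

Lemma G_le1 n v : G n v <= 1.
Proof.
elim: n v => [|n IH] v; first exact: G0.
rewrite G_S.
have Hc : npos v = #|[pred i | (0 < v i)%N]|.
  by rewrite /npos cardsE.
have Hs : \sum_(i | (0 < v i)%N) G n (decp v i) <= (npos v)%:R.
  apply: le_trans (ler_sum _ (fun i _ => IH (decp v i))) _.
  by rewrite sumr_const Hc.
case Hk: (npos v) => [|k].
  rewrite big_pred0 ?mulr0 // => i.
  by move: Hk; rewrite Hc => /card0_eq /(_ i); rewrite !inE.
have Hk1 : (1 <= k.+1 <= d.+1)%N.
  rewrite /= -Hk; apply: leq_trans (max_card _) _; by rewrite card_ord.
have [Ha Ha'] := halpha _ Hk1.
rewrite Hk in Hs.
apply: le_trans (ler_wpM2l (ltW Ha) Hs) _.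
apply: le_trans (ler_wpM2r (ler0n _ _) Ha') _.
by rewrite mulVf // pnatr_eq0.
Qed.

End Aux.

Theorem mainTheorem8 (R : realFieldType) (d : nat) (alpha : nat -> R)
  (halpha : forall i : nat, (1 <= i <= d.+1)%N ->
     0 < alpha i /\ alpha i <= (i%:R)^-1)
  (v : point d) (t : nat) :
  level_sum alpha t v <= 1.
Proof.
have -> : level_sum alpha t v = @G R d alpha t (psum v - t) v :> R.
  rewrite /level_sum /G; apply: eq_bigr => f /eqP Hf.
  by rewrite /pw Hf.
exact: (@G_le1 R d alpha t halpha).
Qed.
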